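(* Let $k$ be a field of characteristic $\ne 2$ and let $n$ be a positive even integer. Then there is an isomorphism of symmetric bilinear forms over $k$: \[ \phi^{\mathrm{even}}_n \cong \begin{cases} \phi^{\mathrm{odd}}_n & \text{if } n \equiv 0 \bmod 4,\\[2pt] \left\langle 2\binom{n}{n/2}\right\rangle \oplus \phi^{\mathrm{odd}}_n & \text{if } n \equiv 2 \bmod 4. \end{cases} \]
   Context: For $\lambda \in k$, $\langle \lambda \rangle$ denotes a one-dimensional $k$-vector space with basis $e$ and symmetric bilinear form $(e,e)\mapsto\lambda$ (possibly degenerate if $\lambda = 0$ in $k$); $\oplus$ is orthogonal sum. Define $\phi^{\mathrm{odd}}_n := \bigoplus_{0 \le i < n/2,\ i \text{ odd}} \langle \binom{n}{i}\rangle$ and $\phi^{\mathrm{even}}_n := \bigoplus_{0 \le i < n/2,\ i \text{ even}} \langle \binom{n}{i}\rangle$, with binomial coefficients viewed as elements of $k$. *)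

(* Defs.v *)
From mathcomp Require Import all_boot all_algebra.
Set Implicit Arguments. Unset Strict Implicit. Unset Printing Implicit Defensive.
Import GRing.Theory.
Local Open Scope ring_scope.

(* Diagonal symmetric bilinear form <a_0> ⊕ ... ⊕ <a_{m-1}> on k^m, given by
   its Gram matrix: B(x,y) = x *m A *m y^T for row vectors x y.
   Orthogonal sum of diagonal forms = concatenation of the lists. *)
Definition diag_form (k : fieldType) (s : seq k) : 'M[k]_(size s) :=
  diag_mx (\row_(i < size s) s`_i).

(* Isometry of (Gram matrices of) bilinear forms: a linear bijection
   f : k^m -> k^n, f x = x *m P, with B(f x, f y) = A(x, y). *)
Definition form_iso (k : fieldType) (m n : nat) (A : 'M[k]_m) (B : 'M[k]_n) : Prop :=
  exists (P : 'M[k]_(m, n)) (Q : 'M[k]_(n, m)),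
    [/\ P *m Q = 1%:M, Q *m P = 1%:M & P *m B *m P^T = A].

(* phi^odd_n = ⊕_{0 <= i < n/2, i odd} <C(n,i)> ; i < n/2 iff 2 i < n *)
Definition phi_odd (k : fieldType) (n : nat) : seq k :=
  [seq ('C(n, i))%:R | i <- iota 0 n & odd i && (i.*2 < n)%N].

Definition phi_even (k : fieldType) (n : nat) : seq k :=
  [seq ('C(n, i))%:R | i <- iota 0 n & ~~ odd i && (i.*2 < n)%N].

(* Main.v *)
Set Warnings "-notation-overridden,-ambiguous-paths".
Require Import Defs.
From mathcomp Require Import all_boot all_algebra polyXY.
From mathcomp Require Import ring.
Import GRing.Theory.
Set Implicit Arguments. Unset Strict Implicit.
Local Open Scope ring_scope.

Definition Hs (k : fieldType) (d : nat) (p A B : {poly k}) : {poly k} :=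
  \sum_(j < d.+1) (p`_j)%:P * (A ^+ (d - j) * B ^+ j).

Lemma Hs_step (k : fieldType) (d : nat) (c e : k) (p A B : {poly k}) :
  (size p <= d.+1)%N ->
  Hs d.+1 (c *: p + e *: ('X * p)) A B = (c *: A + e *: B) * Hs d p A B.
Proof.
move=> sp; rewrite /Hs.
under eq_bigr => j _ do rewrite coefD !coefZ polyCD mulrDl.
rewrite big_split /= big_ord_recr [X in _ + X]big_ord_recl /=.
rewrite !coefXM /= (nth_default 0 sp) !mulr0 polyC0 !mul0r addr0 add0r.
rewrite mulrDl !mulr_sumr; congr (_ + _); apply: eq_bigr => j _.
  rewrite subSn; last by rewrite -ltnS.
  rewrite exprS -!mul_polyC polyCM; ring.
rewrite coefXM /= subSS exprS -!mul_polyC polyCM; ring.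
Qed.

Lemma size_pab (k : fieldType) (a b : nat) :
  (size ((((1 : {poly k}) + 'X) ^+ a * (1 - 'X) ^+ b))%R <= (a + b).+1)%N.
Proof.
elim: b a => [|b IHb] a.
  rewrite expr0 mulr1 addn0; apply: leq_trans (size_poly_exp_leq _ _) _.
  rewrite addrC -polyC1 size_XaddC /=. by rewrite mul1n.
rewrite exprSr mulrA; apply: leq_trans (size_polyMleq _ _) _.
have -> : size ((1 : {poly k}) - 'X) = 2%N.
  by rewrite -opprB size_polyN -polyC1 size_XsubC.
by rewrite addn2 /= addnS ltnS.
Qed.

Lemma Hs_pab (k : fieldType) (a b : nat) (A B : {poly k}) :
  Hs (a + b) (((1 : {poly k}) + 'X) ^+ a * (1 - 'X) ^+ b) A B =
  (A + B) ^+ a * (A - B) ^+ b.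
Proof.
elim: a => [|a IHa].
  rewrite add0n expr0 !mul1r; elim: b => [|b IHb].
    by rewrite /Hs big_ord1 /= subnn !expr0 coefC eqxx !mulr1.
  have -> : ((1 : {poly k}) - 'X) ^+ b.+1 = 1 *: ((1 - 'X) ^+ b) + (-1) *: ('X * (1 - 'X) ^+ b).
    by rewrite exprS scaleN1r scale1r; ring.
  rewrite Hs_step; last by have := size_pab k 0 b; rewrite expr0 mul1r.
  by rewrite IHb exprS scale1r scaleN1r.
have -> : ((1 : {poly k}) + 'X) ^+ a.+1 * (1 - 'X) ^+ b =
   1 *: (((1 : {poly k}) + 'X) ^+ a * (1 - 'X) ^+ b) + 1 *: ('X * (((1 : {poly k}) + 'X) ^+ a * (1 - 'X) ^+ b)).
  by rewrite !scale1r exprS; ring.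
rewrite addSn Hs_step; last exact: size_pab.
by rewrite IHa !scale1r exprS mulrA.
Qed.

Definition pp (k : fieldType) (n i : nat) : {poly k} :=
  ((1 : {poly k}) + 'X) ^+ (n - i) * (1 - 'X) ^+ i.
Definition cc (k : fieldType) (n i j : nat) : k := (pp k n i)`_j.

Lemma Hs_pp (k : fieldType) (n i : nat) (A B : {poly k}) : (i <= n)%N ->
  \sum_(j < n.+1) (cc k n i j)%:P * (A ^+ (n - j) * B ^+ j) =
  (A + B) ^+ (n - i) * (A - B) ^+ i.
Proof.
move=> le_in; have := Hs_pab (n - i) i A B; rewrite subnK //.
Qed.

Lemma coef_sumX (k : fieldType) (N t : nat) (x : nat -> k) :
  (\sum_(j < N) (x j)%:P * 'X^j)`_t = if (t < N)%N then x t else 0.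
Proof.
rewrite -coef_poly poly_def.
by under eq_bigr do rewrite mul_polyC.
Qed.

Lemma ccR1 (k : fieldType) (n i t : nat) : (i <= n)%N -> (t <= n)%N ->
  cc k n i (n - t) = (-1) ^+ i * cc k n i t.
Proof.
move=> le_in le_tn.
have := @Hs_pp k n i ('X) 1 le_in.
rewrite (reindex_inj (@rev_ord_inj n.+1)) /=.
under eq_bigr => j _ do rewrite expr1n mulr1 subSS (subKn (leq_ord j)).
move/(congr1 (fun p : {poly k} => p`_t)); rewrite (coef_sumX _ _ (fun j => cc k n i (n - j))) ltnS le_tn => ->.
have -> : ('X + 1 : {poly k}) ^+ (n - i) * ('X - 1) ^+ i = ((-1) ^+ i)%:P * pp k n i.
  rewrite /pp rmorphXn /= polyCN polyC1.
  have -> : ('X - 1 : {poly k}) = -(1 - 'X) by ring.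
  rewrite exprNn ['X + 1]addrC; ring.
by rewrite coefCM.
Qed.

Lemma ccR2 (k : fieldType) (n i t : nat) : (i <= n)%N -> (t <= n)%N ->
  cc k n (n - i) t = (-1) ^+ t * cc k n i t.
Proof.
move=> le_in le_tn.
have := @Hs_pp k n i 1 (- 'X) le_in.
have E : forall j : 'I_n.+1, (cc k n i j)%:P * (1 ^+ (n - j) * (- 'X) ^+ j) =
    ((-1) ^+ j * cc k n i j)%:P * 'X^j.
  move=> j; rewrite expr1n mul1r polyCM polyC_exp polyCN polyC1 exprNn; ring.
rewrite (eq_bigr _ (fun j _ => E j)).
move/(congr1 (fun p : {poly k} => p`_t)).
rewrite (coef_sumX _ _ (fun j => (-1) ^+ j * cc k n i j)) ltnS le_tn => ->.
by rewrite /cc /pp subKn // opprK mulrC.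
Qed.

Lemma two_pow (k : fieldType) (a b : nat) :
  ((2 : {poly k}) ^+ a * (2 * 'X) ^+ b) = ((2 : k) ^+ (a + b))%:P * 'X^b.
Proof.
by rewrite exprMn mulrA -exprD rmorphXn /= rmorph_nat.
Qed.

Lemma ccS3 (k : fieldType) (n i l : nat) : (i <= n)%N ->
  \sum_(j < n.+1) cc k n i j * cc k n j l = (2 : k) ^+ n * (l == i)%:R.
Proof.
move=> le_in.
have := @Hs_pp k n i (1 + 'X) (1 - 'X) le_in.
have -> : (1 + 'X) + (1 - 'X) = 2 :> {poly k} by ring.
have -> : (1 + 'X) - (1 - 'X) = 2 * 'X :> {poly k} by ring.
rewrite two_pow subnK //.
move/(congr1 (fun p : {poly k} => p`_l)).
rewrite coef_sum coefCM coefXn => <-.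
by apply: eq_bigr => j _; rewrite coefCM.
Qed.

Lemma ccS4 (k : fieldType) (n i l : nat) : (i <= n)%N ->
  \sum_(j < n.+1) (-1) ^+ j * cc k n i j * cc k n j l =
    (2 : k) ^+ n * (l == (n - i)%N)%:R.
Proof.
move=> le_in.
have := @Hs_pp k n i (1 + 'X) (- (1 - 'X)) le_in.
have -> : (1 + 'X) + - (1 - 'X) = 2 * 'X :> {poly k} by ring.
have -> : (1 + 'X) - - (1 - 'X) = 2 :> {poly k} by ring.
rewrite mulrC two_pow addnC subnK //.
move/(congr1 (fun p : {poly k} => p`_l)).
rewrite coef_sum coefCM coefXn => <-.
apply: eq_bigr => j _.
have -> : (cc k n i j)%:P * ((1 + 'X) ^+ (n - j) * (- (1 - 'X)) ^+ j) =
   ((-1) ^+ j * cc k n i j)%:P * pp k n j.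
  rewrite polyCM polyC_exp polyCN polyC1 /pp exprNn; ring.
by rewrite coefCM.
Qed.

Lemma sum_delta (V : nmodType) (N a : nat) (F : nat -> V) : (a < N)%N ->
  \sum_(i < N) F i *+ (a == i) = F a.
Proof.
move=> lt; rewrite (bigD1 (Ordinal lt)) //= eqxx mulr1n big1 ?addr0 //.
move=> i; rewrite -val_eqE /= eq_sym => /negbTE ->; exact: mulr0n.
Qed.

Definition WW (k : fieldType) (n : nat) : {poly {poly k}} :=
  \sum_(i < n.+1) ((pp k n i)%:P * 'X^i) *+ 'C(n, i).

Lemma WW_coef (k : fieldType) (n a b : nat) : (a <= n)%N ->
  (WW k n)`_a`_b = cc k n a b *+ 'C(n, a).
Proof.
move=> le_an; rewrite /WW coef_sum.
under eq_bigr => i _ do rewrite coefMn coefCM coefXn mulr_natr mulrnAC.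
rewrite (sum_delta (fun i => pp k n i *+ 'C(n, i))) //.
by rewrite coefMn.
Qed.

Lemma WW_closed (k : fieldType) (n : nat) :
  WW k n = (1 + ('X)%:P + (1 - ('X)%:P) * 'X) ^+ n.
Proof.
rewrite exprDn /WW; apply: eq_bigr => i _; congr (_ *+ _).
rewrite /pp rmorphM !rmorphXn rmorphB rmorphD rmorph1 /= exprMn mulrA.
by [].
Qed.

Lemma cc_sym (k : fieldType) (n a b : nat) : (a <= n)%N -> (b <= n)%N ->
  cc k n a b *+ 'C(n, a) = cc k n b a *+ 'C(n, b).
Proof.
move=> le_an le_bn; rewrite -WW_coef // -WW_coef // -coef_swapXY.
suff -> : swapXY (WW k n) = WW k n by [].
rewrite WW_closed rmorphXn !rmorphD !rmorphM !rmorphB !rmorph1 /=.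
rewrite swapXY_X swapXY_polyC map_polyX; congr (_ ^+ _); ring.
Qed.

Lemma cc_symM (k : fieldType) (n a b : nat) : (a <= n)%N -> (b <= n)%N ->
  ('C(n, a))%:R * cc k n a b = ('C(n, b))%:R * cc k n b a.
Proof. by move=> ha hb; rewrite !mulr_natl; exact: cc_sym. Qed.

Lemma mulmx1C_gen (k : fieldType) (N1 N2 : nat) (e : N1 = N2)
  (P : 'M[k]_(N1, N2)) (Q : 'M[k]_(N2, N1)) : P *m Q = 1%:M -> Q *m P = 1%:M.
Proof. by subst N2; exact: mulmx1C. Qed.

Lemma iso_gen (k : fieldType) (s t : seq k) (p q : nat -> nat -> k) :
  size s = size t ->
  (forall a b, (a < size s)%N -> (b < size s)%N ->
     \sum_(c < size t) p a c * q c b = (a == b)%:R) ->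
  (forall a c, (a < size s)%N -> (c < size t)%N -> t`_c * p a c = q c a * s`_a) ->
  form_iso (diag_form s) (diag_form t).
Proof.
move=> est PQ BQ.
pose P := \matrix_(i < size s, j < size t) p i j.
pose Q := \matrix_(i < size t, j < size s) q i j.
have ePQ : P *m Q = 1%:M.
  apply/matrixP => i j; rewrite !mxE.
  under eq_bigr do rewrite !mxE.
  by rewrite PQ.
have eQP : Q *m P = 1%:M by exact: mulmx1C_gen ePQ.
exists P, Q; split => //.
have eB : diag_form t *m P^T = Q *m diag_form s.
  apply/matrixP => i j; rewrite /diag_form mul_diag_mx mul_mx_diag !mxE.
  exact: BQ.
by rewrite -mulmxA eB mulmxA ePQ mul1mx.
Qed.

Lemma filt_iota (M : nat) :
  [seq i <- iota 0 M | ~~ odd i] = map double (iota 0 (uphalf M)) /\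
  [seq i <- iota 0 M | odd i] = map (fun a => a.*2.+1) (iota 0 M./2).
Proof.
elim: M => [|M [IH1 IH2]]; first by [].
rewrite -addn1 iotaD filter_cat filter_cat IH1 IH2 /= add0n.
have hu : (uphalf (M + 1) = uphalf M + ~~ odd M)%N.
  rewrite addn1 uphalfE /= uphalf_half. by case: (odd M) => /=; rewrite ?addn0 ?addn1 ?add0n ?add1n.
have hh : ((M + 1)./2 = M./2 + odd M)%N.
  by rewrite addn1 /= uphalf_half addnC.
rewrite hu hh !iotaD !map_cat add0n.
case oM: (odd M) => /=; split => //.
- by rewrite add0n -[M in [:: M]](odd_double_half M) oM.
- by rewrite (even_uphalfK (negbT oM)).
Qed.

Lemma phi_even_eq (k : fieldType) (m : nat) :
  phi_even k m.*2 = [seq ('C(m.*2, a.*2))%:R | a <- iota 0 (uphalf m)].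
Proof.
rewrite /phi_even -addnn iotaD filter_cat add0n.
rewrite (@eq_in_filter _ _ pred0 (iota m m)); last first.
  move=> i; rewrite mem_iota => /andP[hi _] /=.
  by rewrite addnn ltn_double ltnNge hi andbF.
rewrite filter_pred0 cats0.
rewrite (@eq_in_filter _ _ (fun i => ~~ odd i) (iota 0 m)); last first.
  move=> i; rewrite mem_iota add0n /= => hi.
  by rewrite addnn ltn_double hi andbT.
by rewrite (filt_iota m).1 -map_comp.
Qed.

Lemma phi_odd_eq (k : fieldType) (m : nat) :
  phi_odd k m.*2 = [seq ('C(m.*2, a.*2.+1))%:R | a <- iota 0 m./2].
Proof.
rewrite /phi_odd -addnn iotaD filter_cat add0n.
rewrite (@eq_in_filter _ _ pred0 (iota m m)); last first.
  move=> i; rewrite mem_iota => /andP[hi _] /=.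
  by rewrite addnn ltn_double ltnNge hi andbF.
rewrite filter_pred0 cats0.
rewrite (@eq_in_filter _ _ (fun i => odd i) (iota 0 m)); last first.
  move=> i; rewrite mem_iota add0n /= => hi.
  by rewrite addnn ltn_double hi andbT.
by rewrite (filt_iota m).2 -map_comp.
Qed.

From mathcomp Require Import zify.

Lemma odd_sum (k : fieldType) (M : nat) (F : nat -> k) :
  \sum_(j < M) (odd j)%:R * F j = \sum_(c < M./2) F (c.*2.+1).
Proof.
elim: M => [|M IH]; first by rewrite !big_ord0.
rewrite big_ord_recr /= IH.
rewrite uphalf_half; case oM: (odd M) => /=.
  rewrite big_ord_recr /= mul1r; congr (_ + F _).
  by rewrite -[LHS](odd_double_half M) oM.
by rewrite mul0r addr0.
Qed.

Lemma fold_sum (k : fieldType) (m : nat) (F : nat -> k) :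
  (forall j, (j <= m.*2)%N -> F (m.*2 - j)%N = F j) ->
  \sum_(j < m.*2.+1) F j = 2 * \sum_(j < m) F j + F m.
Proof.
move=> Fs.
rewrite -!(big_mkord xpredT) (@big_cat_nat _ _ _ m) //=; last by lia.
rewrite (@big_ltn _ _ _ m); last by lia.
rewrite (_ : m.+1 = 0 + m.+1)%N // big_addn.
rewrite (_ : (m.*2.+1 - m.+1 = m)%N); last by lia.
rewrite [X in _ = 2 * X + _]big_nat_rev /=.
have E : \sum_(0 <= i < m) F (i + m.+1)%N = \sum_(0 <= i < m) F (0 + m - i.+1)%N.
  apply: eq_big_nat => i /andP[_ him]; rewrite -Fs; last by lia.
  congr F; lia.
rewrite E.
rewrite [X in X + _ = _]big_nat_rev /=.
ring.
Qed.

Lemma core (k : fieldType) (m a b : nat) : (a.*2 < m)%N -> (b.*2 < m)%N ->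
  4 * \sum_(c < m./2) (cc k m.*2 b.*2 c.*2.+1 * cc k m.*2 c.*2.+1 a.*2)
  + 2 * (odd m)%:R * (cc k m.*2 b.*2 m * cc k m.*2 m a.*2)
  = 2 ^+ m.*2 * (a == b)%:R.
Proof.
move=> ha hb.
set n := m.*2.
pose G j := cc k n b.*2 j * cc k n j a.*2.
have hbn : (b.*2 <= n)%N by rewrite /n -!muln2; lia.
have han : (a.*2 <= n)%N by rewrite /n -!muln2; lia.
have D : \sum_(j < n.+1) (odd j)%:R * G j * 2 = 2 ^+ n * (a == b)%:R.
  have := ccS3 k (a.*2) hbn; have := ccS4 k (a.*2) hbn.
  have -> : (a.*2 == n - b.*2)%N = false.
    by apply/negbTE; rewrite /n -!muln2; lia.
  have -> : (a.*2 == b.*2) = (a == b).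
    by apply/idP/idP => /eqP h; apply/eqP; rewrite -?muln2 in h *; lia.
  rewrite mulr0 => E4 E3.
  have -> : 2 ^+ n * (a == b)%:R =
     \sum_(j < n.+1) cc k n b.*2 j * cc k n j a.*2 -
     \sum_(j < n.+1) (-1) ^+ j * cc k n b.*2 j * cc k n j a.*2 by rewrite E3 E4 subr0.
  rewrite -sumrB; apply: eq_bigr => j _.
  rewrite /G -signr_odd; case: (odd j) => /=; ring.
have Fs : forall j, (j <= n)%N -> (odd (n - j))%:R * G (n - j)%N = (odd j)%:R * G j.
  move=> j hj; rewrite oddN ?odd_double // /G ccR1 // ccR2 //.
  have s2 : forall x, (-1 : k) ^+ x.*2 = 1 by move=> x; rewrite -signr_odd odd_double.
  by rewrite !s2 !mul1r.
have := @fold_sum k m (fun j => (odd j)%:R * G j) Fs.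
rewrite (@odd_sum k m G) => E.
rewrite -D -mulr_suml E /G; ring.
Qed.

Theorem theoremB (k : fieldType) (n : nat) :
  2 \notin [pchar k] -> (0 < n)%N -> ~~ odd n ->
  form_iso (diag_form (phi_even k n))
    (diag_form (if (n %% 4 == 0)%N then phi_odd k n
                else ((2 * 'C(n, n./2))%:R :: phi_odd k n))).
Proof.
move=> h2c _ en.
have [m ->] : exists m, n = m.*2.
  by exists n./2; rewrite -[LHS](odd_double_half n) (negbTE en).
have h2 : (2 : k) != 0 by move: h2c; rewrite inE /=.
rewrite doubleK.
have -> : (m.*2 %% 4 == 0)%N = ~~ odd m.
  rewrite -[m in LHS](odd_double_half m); case: (odd m) => /=; rewrite -!muln2.
    by apply/negbTE/eqP; lia.
  by apply/eqP; lia.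
rewrite phi_even_eq phi_odd_eq.
set h := ((2 : k) ^+ m)^-1.
have hh : h * h * 2 ^+ m.*2 = 1.
  rewrite -addnn exprD /h mulrACA mulVf ?mul1r // expf_neq0 //.
have hm := halfK m; have hu := uphalf_half m.
case om: (odd m) => /=.
  rewrite om /= in hm; rewrite om /= add1n in hu.
  have m0 : (0 < m)%N by case: m om {hm hu hh h} => [|].
  rewrite -!muln2 in hm.
  refine (@iso_gen k _ ((2 * 'C(m.*2, m))%:R :: [seq 'C(m.*2, a.*2.+1)%:R | a <- iota 0 m./2])
     (fun a c => if c is c'.+1 then 2 * h * cc k m.*2 c'.*2.+1 a.*2 else h * cc k m.*2 m a.*2)
     (fun c b => 2 * h * cc k m.*2 b.*2 (if c is c'.+1 then c'.*2.+1 else m)) _ _ _).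
  - by rewrite /= !size_map !size_iota hu.
  - move=> a b; rewrite /= !size_map !size_iota hu => ha hb.
    have ha' : (a.*2 < m)%N by rewrite -muln2; lia.
    have hb' : (b.*2 < m)%N by rewrite -muln2; lia.
    have := core k ha' hb'; rewrite om /= => C.
    transitivity (h * h * (4 * \sum_(c < m./2) (cc k m.*2 b.*2 c.*2.+1 * cc k m.*2 c.*2.+1 a.*2)
        + 2 * 1%:R * (cc k m.*2 b.*2 m * cc k m.*2 m a.*2))).
      rewrite mulrDr big_ord_recl addrC; congr (_ + _).
        rewrite mulrA mulr_sumr; apply: eq_bigr => c _; rewrite lift0 /=; ring.
      rewrite /=; ring.
    by rewrite C mulrA hh mul1r.
  - move=> a [|c]; rewrite /= !size_map !size_iota hu => ha hc.
      have h1 : (m <= m.*2)%N by rewrite -!muln2; lia.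
      have h3 : (a.*2 <= m.*2)%N by rewrite -!muln2; lia.
      have E := cc_symM k h1 h3.
      rewrite (nth_map 0%N) ?size_iota ?hu // nth_iota ?hu // add0n.
      transitivity (2 * h * ('C(m.*2, m)%:R * cc k m.*2 m a.*2)).
        rewrite natrM; ring.
      by rewrite E [_ * cc _ _ _ _]mulrC !mulrA.
    rewrite (nth_map 0%N) ?size_iota // nth_iota // (nth_map 0%N) ?size_iota ?hu //.
    rewrite nth_iota ?hu // !add0n.
    have h1 : (c.*2.+1 <= m.*2)%N by rewrite -!muln2; lia.
    have h3 : (a.*2 <= m.*2)%N by rewrite -!muln2; lia.
    have E := cc_symM k h1 h3.
    by rewrite mulrCA E [_ * cc _ _ _ _]mulrC !mulrA.
rewrite om subn0 in hm; rewrite om add0n in hu.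
rewrite -!muln2 in hm.
apply: (@iso_gen k _ _ (fun a c => 2 * h * cc k m.*2 c.*2.+1 a.*2)
                       (fun c b => 2 * h * cc k m.*2 b.*2 c.*2.+1)).
- by rewrite !size_map !size_iota hu.
- move=> a b; rewrite !size_map !size_iota hu => ha hb.
  have ha' : (a.*2 < m)%N by rewrite -muln2; lia.
  have hb' : (b.*2 < m)%N by rewrite -muln2; lia.
  have := core k ha' hb'; rewrite om mulr0 mul0r addr0 => C.
  transitivity (h * h * (4 * \sum_(c < m./2) (cc k m.*2 b.*2 c.*2.+1 * cc k m.*2 c.*2.+1 a.*2))).
    rewrite !mulr_sumr; apply: eq_bigr => c _; ring.
  by rewrite C mulrA hh mul1r.
- move=> a c; rewrite !size_map !size_iota hu => ha hc.
  rewrite (nth_map 0%N) ?size_iota // nth_iota // (nth_map 0%N) ?size_iota ?hu //.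
  rewrite nth_iota ?hu // !add0n.
  have h1 : (c.*2.+1 <= m.*2)%N by rewrite -!muln2; lia.
  have h3 : (a.*2 <= m.*2)%N by rewrite -!muln2; lia.
  have E := cc_symM k h1 h3.
  by rewrite mulrCA E [_ * cc _ _ _ _]mulrC !mulrA.
Qed.
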